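(* Let $n$ be an odd integer and $k\ge 1$ an integer with $2^k<n<2^{k+1}$, and set $a=n-2^k$. Then there is an orientation of the $n$-cube in which every vertex has in-degree $a$ or $n$.
   Context: The $n$-cube is the graph on binary $n$-tuples with edges between tuples differing in exactly one coordinate. An orientation assigns a direction to each edge; the in-degree of a vertex is the number of edges directed into it. *)

(* Defs.v *)
From HB Require Import structures.
From mathcomp Require Import all_boot.
Set Implicit Arguments. Unset Strict Implicit. Unset Printing Implicit Defensive.

Definition cube_vertex (n : nat) := {ffun 'I_n -> bool}.

Definition cube_adj (n : nat) (u v : cube_vertex n) : bool :=
  #|[set i : 'I_n | u i != v i]| == 1.

(* An orientation of the n-cube: a relation o where o u v means the edge
   {u,v} is directed from u to v.  Only edges may be oriented, and each edge
   gets exactly one direction. *)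
Definition is_cube_orientation (n : nat) (o : rel (cube_vertex n)) : Prop :=
  (forall u v, o u v -> cube_adj u v) /\
  (forall u v, cube_adj u v -> o u v (+) o v u).

Definition indeg (n : nat) (o : rel (cube_vertex n)) (v : cube_vertex n) : nat :=
  #|[set u : cube_vertex n | o u v]|.

(* Main.v *)
Require Import Defs.
From HB Require Import structures.
From mathcomp Require Import all_boot.
From Stdlib Require PeanoNat.
Set Implicit Arguments. Unset Strict Implicit. Unset Printing Implicit Defensive.

Lemma powE (k : nat) : Nat.pow 2 k = 2 ^ k.
Proof. by elim: k => [|k IH] //=; rewrite expnS -IH. Qed.

Lemma lxor_lt (k x y : nat) : x < 2 ^ k -> y < 2 ^ k -> Nat.lxor x y < 2 ^ k.
Proof.
case: k => [|k].
  by rewrite expn0 !ltnS !leqn0 => /eqP -> /eqP ->.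
rewrite -!powE => /ltP hx /ltP hy; apply/ltP.
case: (PeanoNat.Nat.eq_dec (Nat.lxor x y) 0) => [->|hne].
  by apply: PeanoNat.Nat.le_lt_trans hx; apply: PeanoNat.Nat.le_0_l.
apply/PeanoNat.Nat.log2_lt_pow2; first by apply/ltP; rewrite lt0n; apply/eqP.
apply: PeanoNat.Nat.le_lt_trans (PeanoNat.Nat.log2_lxor x y) _.
apply: PeanoNat.Nat.max_lub_lt.
- case: (PeanoNat.Nat.eq_dec x 0) => [->|h]; first by apply/ltP.
  by apply/PeanoNat.Nat.log2_lt_pow2 => //; apply/ltP; rewrite lt0n; apply/eqP.
- case: (PeanoNat.Nat.eq_dec y 0) => [->|h]; first by apply/ltP.
  by apply/PeanoNat.Nat.log2_lt_pow2 => //; apply/ltP; rewrite lt0n; apply/eqP.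
Qed.

Notation xr := PeanoNat.Nat.lxor.
HB.instance Definition _ := Monoid.isComLaw.Build nat 0 xr
  (fun a b c => esym (PeanoNat.Nat.lxor_assoc a b c)) PeanoNat.Nat.lxor_comm PeanoNat.Nat.lxor_0_l.

Definition flip n (v : cube_vertex n) (i : 'I_n) : cube_vertex n :=
  [ffun j => if j == i then ~~ v j else v j].
Definition par n (v : cube_vertex n) : bool := \big[addb/false]_(j : 'I_n) v j.
Definition syn n k (v : cube_vertex n) : nat :=
  \big[xr/0]_(j : 'I_n | j < 2 ^ k) (if v j then val j else 0).
Definition dir n k a (v : cube_vertex n) (i : 'I_n) : bool :=
  if par v then (syn k (flip v i) < a) && (i < 2 ^ k)
  else ~~ ((syn k v < a) && (i < 2 ^ k)).
Definition ori n k a : rel (cube_vertex n) :=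
  fun u w => [exists i, (u == flip w i) && dir k a w i].

Lemma flipK n (v : cube_vertex n) i : flip (flip v i) i = v.
Proof. by apply/ffunP => j; rewrite !ffunE; case: eqP => // ->; rewrite negbK. Qed.

Lemma flip_inj n (v : cube_vertex n) : injective (flip v).
Proof.
move=> i j /ffunP /(_ i); rewrite !ffunE eqxx; case: eqP => [->//|_].
by case: (v i).
Qed.

Lemma par_flip n (v : cube_vertex n) i : par (flip v i) = ~~ par v.
Proof.
rewrite /par (bigD1 i) //= [in RHS](bigD1 i) //= ffunE eqxx.
rewrite (eq_bigr (fun j => v j)); last by move=> j /negPf hj; rewrite ffunE hj.
by rewrite addNb.
Qed.

Lemma syn_flip n k (v : cube_vertex n) (i : 'I_n) : i < 2 ^ k ->
  syn k (flip v i) = xr (syn k v) i.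
Proof.
move=> hi; rewrite /syn (bigD1 i) //= [in RHS](bigD1 i) //= ffunE eqxx.
rewrite (eq_bigr (fun j : 'I_n => if v j then val j else 0)); last first.
  by move=> j /andP [_ /negPf hj]; rewrite ffunE hj.
set R := \big[_/_]_(_ | _) _.
case: (v i) => /=.
- rewrite PeanoNat.Nat.lxor_0_l PeanoNat.Nat.lxor_comm -PeanoNat.Nat.lxor_assoc.
  by rewrite PeanoNat.Nat.lxor_nilpotent PeanoNat.Nat.lxor_0_l.
- by rewrite PeanoNat.Nat.lxor_0_l PeanoNat.Nat.lxor_comm.
Qed.

Lemma syn_lt n k (v : cube_vertex n) : syn k v < 2 ^ k.
Proof.
rewrite /syn; apply: (big_ind (fun x => x < 2 ^ k)).
- by rewrite expn_gt0.
- by move=> x y; apply: lxor_lt.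
- by move=> j hj; case: (v j) => //; rewrite expn_gt0.
Qed.

Lemma adj_flip n (u v : cube_vertex n) : cube_adj u v -> exists i, u = flip v i.
Proof.
rewrite /cube_adj => /cards1P [i hi]; exists i.
apply/ffunP => j; rewrite ffunE.
move/setP: hi => /(_ j); rewrite !inE.
by case: (j == i); case: (u j); case: (v j).
Qed.

Lemma flip_adj n (v : cube_vertex n) i : cube_adj (flip v i) v.
Proof.
rewrite /cube_adj; apply/cards1P; exists i; apply/setP => j.
rewrite !inE ffunE; case: (j == i) => //; [by case: (v j) | by rewrite eqxx].
Qed.

Lemma xrK x y : xr x (xr x y) = y.
Proof.
by rewrite -PeanoNat.Nat.lxor_assoc PeanoNat.Nat.lxor_nilpotent PeanoNat.Nat.lxor_0_l.
Qed.

Lemma indeg_ori n k a (w : cube_vertex n) :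
  indeg (ori k a) w = #|[set i | dir k a w i]|.
Proof.
rewrite /indeg.
have -> : [set u | ori k a u w] = flip w @: [set i | dir k a w i].
  apply/setP => u; rewrite inE; apply/existsP/imsetP.
  - by case=> i /andP [/eqP -> d]; exists i; rewrite ?inE.
  - by case=> i; rewrite inE => d ->; exists i; rewrite eqxx.
by rewrite card_imset //; apply: flip_inj.
Qed.

Lemma card_lt n m : m <= n -> #|[set i : 'I_n | i < m]| = m.
Proof.
move=> hm.
have -> : [set i : 'I_n | i < m] = (widen_ord hm) @: [set: 'I_m].
  apply/setP => i; rewrite inE; apply/idP/imsetP.
  - by move=> h; exists (Ordinal h) => //; apply: val_inj.
  - by case=> j _ ->; rewrite /= ltn_ord.
rewrite card_imset ?cardsT ?card_ord //.
by move=> j1 j2 /(congr1 val) /= h; apply: val_inj.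
Qed.

Lemma card_xor n k a x : 2 ^ k <= n -> a <= 2 ^ k -> x < 2 ^ k ->
  #|[set i : 'I_n | (i < 2 ^ k) && (xr x i < a)]| = a.
Proof.
move=> hk ha hx.
have hf : forall j : 'I_a, xr x j < 2 ^ k.
  by move=> j; apply: lxor_lt => //; apply: leq_trans (ltn_ord j) ha.
pose f (j : 'I_a) : 'I_n := Ordinal (leq_trans (hf j) hk).
have -> : [set i : 'I_n | (i < 2 ^ k) && (xr x i < a)] = f @: [set: 'I_a].
  apply/setP => i; rewrite inE; apply/idP/imsetP.
  - case/andP=> h1 h2; exists (Ordinal h2) => //; apply: val_inj => /=.
    by rewrite xrK.
  - by case=> j _ ->; rewrite /= hf xrK ltn_ord.
rewrite card_imset ?cardsT ?card_ord //.
move=> j1 j2 /(congr1 val) /= h; apply: val_inj.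
by rewrite /= -(xrK x j1) h xrK.
Qed.

Lemma ori_flip n k a (v : cube_vertex n) i : ori k a (flip v i) v = dir k a v i.
Proof.
apply/existsP/idP.
- by case=> j /andP [/eqP /flip_inj ->].
- by move=> d; exists i; rewrite eqxx.
Qed.

Lemma dir_flip n k a (v : cube_vertex n) i : dir k a (flip v i) i = ~~ dir k a v i.
Proof.
rewrite /dir par_flip flipK; case: (par v) => //=.
by rewrite negbK.
Qed.

Theorem mainTheorem5 (n k : nat) :
  odd n -> 1 <= k -> 2 ^ k < n < 2 ^ k.+1 ->
  exists o : rel (cube_vertex n),
    is_cube_orientation o /\
    forall v : cube_vertex n, indeg o v = n - 2 ^ k \/ indeg o v = n.
Proof.
move=> _ _ /andP [h1 h2].
have hk : 2 ^ k <= n by apply: ltnW.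
have ha : n - 2 ^ k <= 2 ^ k.
  by rewrite leq_subLR addnn -mul2n -expnS; apply: ltnW.
exists (ori k (n - 2 ^ k)); split; first split.
- by move=> u v /existsP [i /andP [/eqP -> _]]; apply: flip_adj.
- move=> u v /adj_flip [i ->].
  rewrite ori_flip -{2}(flipK v i) ori_flip dir_flip.
  by case: (dir _ _ _ _).
- move=> v; rewrite indeg_ori.
  case hp: (par v).
  + left.
    have -> : [set i | dir k (n - 2 ^ k) v i] =
              [set i : 'I_n | (i < 2 ^ k) && (xr (syn k v) i < n - 2 ^ k)].
      apply/setP => i; rewrite !inE /dir hp.
      by case hi: (i < 2 ^ k); rewrite ?andbF // syn_flip // andbT.
    by apply: card_xor => //; apply: syn_lt.
  + case hs: (syn k v < n - 2 ^ k).
    * left.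
      have -> : [set i | dir k (n - 2 ^ k) v i] = ~: [set i : 'I_n | i < 2 ^ k].
        by apply/setP => i; rewrite !inE /dir hp hs.
      by rewrite cardsCs setCK card_lt // card_ord.
    * right.
      have -> : [set i | dir k (n - 2 ^ k) v i] = [set: 'I_n].
        by apply/setP => i; rewrite !inE /dir hp hs.
      by rewrite cardsT card_ord.
Qed.
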